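(* For any quantum channel $\mathcal{N}$, any integer $d\ge1$ with $I_d$ the noiseless qudit channel (identity channel on a $d$-dimensional system), and any $k>0$, $$F^{PPTp}(\mathcal{N}\otimes I_d,kd)=F^{PPTp}(\mathcal{N},k).$$ Consequently $\kappa^{PPTp}(\mathcal{N}\otimes I_d)=d\,\kappa^{PPTp}(\mathcal{N})$.
   Context: For a quantum channel $\mathcal{N}:\mathcal{L}(A')\to\mathcal{L}(B)$ with $A\cong A'$ and Choi matrix $J_{AB}=\sum_{i,j}|i\rangle\langle j|_A\otimes\mathcal{N}(|i\rangle\langle j|_{A'})$, and $k>0$, $F^{PPTp}(\mathcal{N},k)$ is the optimal value of: maximize $\operatorname{tr}(J_{AB}W_{AB})$ subject to $0\le W_{AB}\le\rho_A\otimes\mathbb{1}_B$, $\operatorname{tr}\rho_A=1$, $-\frac1k\rho_A\otimes\mathbb{1}_B\le W_{AB}^{T_B}\le\frac1k\rho_A\otimes\mathbb{1}_B$, where $T_B$ is partial transpose on $B$. (For a product channel the input system is $AA_2$ and output $BB_2$, with the partial transpose taken on the whole output.) $\kappa^{PPTp}(\mathcal{N})=\max\{k\ge0:F^{PPTp}(\mathcal{N},k)=1\}$. *)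

(* Defs.v *)
From HB Require Import structures.
From mathcomp Require Import all_boot all_order all_algebra.
From mathcomp Require Import boolp classical_sets reals constructive_ereal ereal.
From mathcomp.real_closed Require Import complex mxtens.

Set Implicit Arguments.
Unset Strict Implicit.
Unset Printing Implicit Defensive.

Import Order.TTheory GRing.Theory Num.Theory.
Local Open Scope ring_scope.

Section QDefs.
Variable R : realType.
Local Notation C := R[i].

Definition adjmx {p q : nat} (A : 'M[C]_(p, q)) : 'M[C]_(q, p) :=
  (map_mx Num.conj A)^T.

Definition psd {p : nat} (A : 'M[C]_p) : Prop :=
  adjmx A = A /\ forall v : 'cV[C]_p, 0 <= (adjmx v *m A *m v) 0 0.

Definition lemx {p : nat} (A B : 'M[C]_p) : Prop := psd (B - A).

(* tensor product f (x) g of linear maps on matrix spaces, defined as the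
   linear extension on matrix units:  E_ij (x) E_kl |-> f(E_ij) (x) g(E_kl). *)
Definition tensmap {n1 m1 n2 m2 : nat}
  (f : 'M[C]_n1 -> 'M[C]_m1) (g : 'M[C]_n2 -> 'M[C]_m2)
  (X : 'M[C]_(n1 * n2)) : 'M[C]_(m1 * m2) :=
  \sum_(i < n1) \sum_(j < n1) \sum_(k < n2) \sum_(l < n2)
     X (mxtens_index (i, k)) (mxtens_index (j, l))
       *: (f (delta_mx i j) *t g (delta_mx k l)).

Definition is_channel {n m : nat} (N : 'M[C]_n -> 'M[C]_m) : Prop :=
  [/\ (forall (a : C) (X Y : 'M[C]_n), N (a *: X + Y) = a *: N X + N Y),
      (forall (p : nat) (X : 'M[C]_(p * n)),
          psd X -> psd (tensmap (fun Y : 'M[C]_p => Y) N X)) &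
      (forall X : 'M[C]_n, \tr (N X) = \tr X)].

Definition choi {n m : nat} (N : 'M[C]_n -> 'M[C]_m) : 'M[C]_(n * m) :=
  \sum_(i < n) \sum_(j < n) (delta_mx i j *t N (delta_mx i j)).

(* partial transpose on the second (output) factor B *)
Definition ptB {n m : nat} (X : 'M[C]_(n * m)) : 'M[C]_(n * m) :=
  \matrix_(r, s)
    X (mxtens_index ((mxtens_unindex r).1, (mxtens_unindex s).2))
      (mxtens_index ((mxtens_unindex s).1, (mxtens_unindex r).2)).

Definition pptp_feasible {n m : nat} (N : 'M[C]_n -> 'M[C]_m) (k : R)
  (W : 'M[C]_(n * m)) (rho : 'M[C]_n) : Prop :=
  let S := rho *t (1%:M : 'M[C]_m) in
  [/\ lemx 0 W, lemx W S, \tr rho = 1,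
      lemx (- ((k^-1)%:C%C *: S)) (ptB W) &
      lemx (ptB W) ((k^-1)%:C%C *: S)].

Definition Fpptp {n m : nat} (N : 'M[C]_n -> 'M[C]_m) (k : R) : R :=
  sup [set r : R | exists W rho,
         pptp_feasible N k W rho /\ \tr (choi N *m W) = r%:C%C].

(* kappa^{PPTp}(N) = max { k > 0 : F^{PPTp}(N,k) = 1 }, taken as a supremum
   in the extended reals *)
Definition kappa_pptp {n m : nat} (N : 'M[C]_n -> 'M[C]_m) : \bar R :=
  ereal_sup [set k%:E | k in [set k : R | 0 < k /\ Fpptp N k = 1]].

End QDefs.

(* Main.v *)
Set Warnings "-notation-overridden,-ambiguous-paths,-notation-incompatible-prefix".
Require Import Defs.
From HB Require Import structures.
From mathcomp Require Import all_boot all_order all_algebra.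
From mathcomp Require Import boolp classical_sets reals constructive_ereal ereal.
From mathcomp.real_closed Require Import complex mxtens.
Set Implicit Arguments.
Unset Strict Implicit.
Unset Printing Implicit Defensive.
Import Order.TTheory GRing.Theory Num.Theory.
Local Open Scope ring_scope.

Lemma idx_inj p q : injective (@mxtens_index p q).
Proof. exact: (can_inj (@mxtens_indexK p q)). Qed.

Section Basics.
Variable R : realType.
Local Notation C := R[i].

Lemma adjmxE p q (A : 'M[C]_(p,q)) i j : adjmx A i j = Num.conj (A j i).
Proof. by rewrite /adjmx !mxE. Qed.

Lemma adjmxK p q (A : 'M[C]_(p,q)) : adjmx (adjmx A) = A.
Proof. by apply/matrixP=> i j; rewrite !adjmxE conjCK. Qed.

Lemma adjmxM p q r (A : 'M[C]_(p,q)) (B : 'M[C]_(q,r)) :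
  adjmx (A *m B) = adjmx B *m adjmx A.
Proof.
apply/matrixP=> i j; rewrite adjmxE !mxE rmorph_sum; apply: eq_bigr=> k _.
by rewrite rmorphM !adjmxE mulrC.
Qed.

Lemma adjmxD p q (A B : 'M[C]_(p,q)) : adjmx (A + B) = adjmx A + adjmx B.
Proof. by apply/matrixP=> i j; rewrite /adjmx !mxE rmorphD. Qed.

Lemma adjmxN p q (A : 'M[C]_(p,q)) : adjmx (- A) = - adjmx A.
Proof. by apply/matrixP=> i j; rewrite /adjmx !mxE rmorphN. Qed.

Lemma adjmxZ p q (c : C) (A : 'M[C]_(p,q)) : adjmx (c *: A) = Num.conj c *: adjmx A.
Proof. by apply/matrixP=> i j; rewrite /adjmx !mxE rmorphM. Qed.

Lemma adjmx0 p q : adjmx (0 : 'M[C]_(p,q)) = 0.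
Proof. by apply/matrixP=> i j; rewrite /adjmx !mxE rmorph0. Qed.

Lemma adjmx_sum p q I (r : seq I) (P : pred I) (F : I -> 'M[C]_(p,q)) :
  adjmx (\sum_(i <- r | P i) F i) = \sum_(i <- r | P i) adjmx (F i).
Proof.
elim/big_rec2: _ => [|i x y _ <-]; first exact: adjmx0.
by rewrite adjmxD.
Qed.

Lemma psd0 p : psd (0 : 'M[C]_p).
Proof. split; first exact: adjmx0. by move=> v; rewrite mulmx0 mul0mx mxE. Qed.

Lemma psdD p (A B : 'M[C]_p) : psd A -> psd B -> psd (A + B).
Proof.
move=> [hA qA] [hB qB]; split; first by rewrite adjmxD hA hB.
by move=> v; rewrite mulmxDr mulmxDl mxE addr_ge0.
Qed.

Lemma psd_sum p I (r : seq I) (P : pred I) (F : I -> 'M[C]_p) :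
  (forall i, P i -> psd (F i)) -> psd (\sum_(i <- r | P i) F i).
Proof.
move=> h; elim/big_rec: _ => [|i x Pi hx]; first exact: psd0.
exact: psdD (h i Pi) hx.
Qed.

Lemma psdZ p (c : C) (A : 'M[C]_p) : 0 <= c -> psd A -> psd (c *: A).
Proof.
move=> c0 [hA qA]; split; first by rewrite adjmxZ hA conj_Creal // ger0_real.
by move=> v; rewrite -scalemxAr -scalemxAl mxE mulr_ge0.
Qed.

Lemma psd_congr p q (M : 'M[C]_(p,q)) (A : 'M[C]_q) : psd A -> psd (M *m A *m adjmx M).
Proof.
move=> [hA qA]; split; first by rewrite !adjmxM adjmxK hA mulmxA.
move=> v; have := qA (adjmx M *m v).
by rewrite adjmxM adjmxK !mulmxA.
Qed.

Lemma lemxP p (A B : 'M[C]_p) : lemx A B <-> psd (B - A).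
Proof. by []. Qed.


Section Polar.
Variables (p q d : nat) (E : 'I_d -> 'I_d -> 'M[C]_(p,q)).

Definition Aop (Y : 'M[C]_q) : 'M[C]_p := \sum_i \sum_j E i j *m Y *m adjmx (E i j).
Definition Bop (Y : 'M[C]_q) : 'M[C]_p := \sum_i \sum_j E i j *m Y *m adjmx (E j i).

Lemma AopD Y Z : Aop (Y + Z) = Aop Y + Aop Z.
Proof. rewrite /Aop -big_split; apply: eq_bigr=> i _; rewrite -big_split; apply: eq_bigr=> j _.
by rewrite mulmxDr mulmxDl. Qed.
Lemma AopN Y : Aop (- Y) = - Aop Y.
Proof. rewrite /Aop -sumrN; apply: eq_bigr=> i _; rewrite -sumrN; apply: eq_bigr=> j _.
by rewrite mulmxN mulNmx. Qed.
Lemma BopD Y Z : Bop (Y + Z) = Bop Y + Bop Z.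
Proof. rewrite /Bop -big_split; apply: eq_bigr=> i _; rewrite -big_split; apply: eq_bigr=> j _.
by rewrite mulmxDr mulmxDl. Qed.
Lemma BopN Y : Bop (- Y) = - Bop Y.
Proof. rewrite /Bop -sumrN; apply: eq_bigr=> i _; rewrite -sumrN; apply: eq_bigr=> j _.
by rewrite mulmxN mulNmx. Qed.

Lemma expand_plus Y :
  \sum_i \sum_j (E i j + E j i) *m Y *m adjmx (E i j + E j i) = (Aop Y + Bop Y) *+ 2.
Proof.
transitivity (\sum_i \sum_j ((E i j *m Y *m adjmx (E i j) + E i j *m Y *m adjmx (E j i))
   + (E j i *m Y *m adjmx (E j i) + E j i *m Y *m adjmx (E i j)))).
  apply: eq_bigr=> i _; apply: eq_bigr=> j _.
  by rewrite adjmxD mulmxDl !mulmxDr !mulmxDl -!addrA; congr (_ + _); rewrite addrCA; congr (_ + _); exact: addrC.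
under eq_bigr do rewrite big_split /=.
rewrite big_split /=.
under [X in _ + X = _]eq_bigr do rewrite big_split /=.
rewrite big_split /= mulr2n; congr (_ + _).
  rewrite /Aop /Bop -big_split; apply: eq_bigr=> i _; by rewrite -big_split.
by rewrite /Aop /Bop; congr (_ + _); rewrite exchange_big.
Qed.

Lemma expand_minus Y :
  \sum_i \sum_j (E i j - E j i) *m Y *m adjmx (E i j - E j i) = (Aop Y - Bop Y) *+ 2.
Proof.
transitivity (\sum_i \sum_j ((E i j *m Y *m adjmx (E i j) - E i j *m Y *m adjmx (E j i))
   + (E j i *m Y *m adjmx (E j i) - E j i *m Y *m adjmx (E i j)))).
  apply: eq_bigr=> i _; apply: eq_bigr=> j _.
  rewrite adjmxD adjmxN mulmxDl !mulmxDr !mulmxDl !mulNmx !mulmxN opprK -!addrA; congr (_ + _).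
  by rewrite addrCA; congr (_ + _); exact: addrC.
under eq_bigr do rewrite big_split /=.
rewrite big_split /= mulr2n.
have AB : Aop Y - Bop Y = \sum_i \sum_j (E i j *m Y *m adjmx (E i j) - E i j *m Y *m adjmx (E j i)).
  rewrite /Aop /Bop -sumrB; apply: eq_bigr=> i _; by rewrite -sumrB.
rewrite AB; congr (_ + _); rewrite exchange_big //.
Qed.

Lemma zid (V : zmodType) (a a' b b' : V) :
  (a - a' + (b - b')) *+ 2 + (a + a' - (b + b')) *+ 2 = ((a - b') *+ 2) *+ 2.
Proof.
rewrite -mulrnDl; congr (_ *+ 2).
rewrite addrACA [X in X + _]addrACA opprD [X in _ + X]addrACA subrr add0r.
by rewrite [- a' + a']addrC subrr addr0 mulr2n addrACA.
Qed.

Lemma polar T X : psd (T - X) -> psd (T + X) -> psd (Aop T - Bop X).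
Proof.
move=> h1 h2.
have hP : psd (\sum_i \sum_j (E i j + E j i) *m (T - X) *m adjmx (E i j + E j i)).
  by apply: psd_sum=> i _; apply: psd_sum=> j _; apply: psd_congr.
have hM : psd (\sum_i \sum_j (E i j - E j i) *m (T + X) *m adjmx (E i j - E j i)).
  by apply: psd_sum=> i _; apply: psd_sum=> j _; apply: psd_congr.
have h4 : (0:C) <= 4%:R^-1 by rewrite invr_ge0 ler0n.
have := psdZ h4 (psdD hP hM).
rewrite expand_plus expand_minus AopD BopD AopN BopN AopD BopD zid.
by rewrite -mulrnA -[_ *+ (2 * 2)]scaler_nat scalerA mulVf ?scale1r // pnatr_eq0.
Qed.

End Polar.
Section Avg.
Variables (p q d : nat) (G : 'I_d -> 'M[C]_(p,q)) (S : 'M[C]_q).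

Lemma avg_psd : (0 < d)%N -> psd S ->
  psd (\sum_i G i *m S *m adjmx (G i)
       - (d%:R^-1) *: ((\sum_i G i) *m S *m adjmx (\sum_i G i))).
Proof.
move=> d0 hS.
pose K := \sum_i G i *m S *m adjmx (G i).
pose L := \sum_i \sum_j G i *m S *m adjmx (G j).
have hL : (\sum_i G i) *m S *m adjmx (\sum_i G i) = L.
  rewrite adjmx_sum mulmx_sumr /L exchange_big; apply: eq_bigr=> j _.
  by rewrite !mulmx_suml.
have hT : psd (\sum_i \sum_j (G i - G j) *m S *m adjmx (G i - G j)).
  by apply: psd_sum=> i _; apply: psd_sum=> j _; apply: psd_congr.
have eT : \sum_i \sum_j (G i - G j) *m S *m adjmx (G i - G j) = (K *+ d - L) *+ 2.
  transitivity (\sum_i \sum_j ((G i *m S *m adjmx (G i) + G j *m S *m adjmx (G j))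
                  - (G i *m S *m adjmx (G j) + G j *m S *m adjmx (G i)))).
    apply: eq_bigr=> i _; apply: eq_bigr=> j _.
    rewrite adjmxD adjmxN mulmxDl !mulmxDr !mulmxDl !mulNmx !mulmxN opprK.
    rewrite opprD -!addrA; congr (_ + _).
    by rewrite [RHS]addrC [- _ - _]addrC -addrA.
  under eq_bigr do rewrite sumrB !big_split /=.
  rewrite sumrB !big_split /=.
  have e1 : \sum_(i < d) \sum_(j < d) G i *m S *m adjmx (G i) = K *+ d.
    by rewrite /K -sumrMnl; apply: eq_bigr=> i _; rewrite sumr_const card_ord.
  have e2 : \sum_(i < d) \sum_(j < d) G j *m S *m adjmx (G j) = K *+ d.
    by rewrite exchange_big e1.
  have e3 : \sum_(i < d) \sum_(j < d) G j *m S *m adjmx (G i) = L.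
    by rewrite exchange_big.
  rewrite e1 e2 e3 -/L mulr2n.
  by rewrite opprD addrACA.
have d0' : (d%:R : C) != 0 by rewrite pnatr_eq0 -lt0n.
have h2d : (0:C) <= (2 * d)%:R^-1 by rewrite invr_ge0 ler0n.
have := psdZ h2d hT; rewrite eT hL.
suff -> : (2 * d)%:R^-1 *: ((K *+ d - L) *+ 2) = K - d%:R^-1 *: L by [].
rewrite -[(K *+ d - L) *+ 2]scaler_nat scalerA natrM invfM mulrC mulrA mulfV ?pnatr_eq0 // mul1r.
by rewrite scalerBr -[K *+ d]scaler_nat scalerA mulVf // scale1r.
Qed.
End Avg.


Lemma sum_delta (T : finType) (x : T) (F : T -> C) :
  \sum_y ((y == x)%:R * F y) = F x.
Proof.
rewrite (bigD1 x) //= eqxx mul1r big1 ?addr0 // => y /negbTE ->.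
by rewrite mul0r.
Qed.

Lemma sum_tens p q (F : 'I_(p * q) -> C) :
  \sum_r F r = \sum_a \sum_b F (mxtens_index (a, b)).
Proof.
rewrite pair_big /=; apply: reindex=> /=.
exists (@mxtens_unindex p q)=> [[a b] _|r _]; first by rewrite mxtens_indexK.
by rewrite mxtens_unindexK.
Qed.

Lemma ptBE p q (X : 'M[C]_(p * q)) a b a' b' :
  ptB X (mxtens_index (a, b)) (mxtens_index (a', b')) =
  X (mxtens_index (a, b')) (mxtens_index (a', b)).
Proof. by rewrite /ptB mxE !mxtens_indexK. Qed.

Lemma natr_andM (b c : bool) (x : C) : b%:R * (c%:R * x) = (b && c)%:R * x.
Proof. by case: b; case: c; rewrite ?mul0r ?mul1r. Qed.

Lemma sum2_pick (T : finType) (F : T -> T -> C) x y :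
  (forall p q, (p != x) || (q != y) -> F p q = 0) -> \sum_p \sum_q F p q = F x y.
Proof.
move=> h; rewrite (bigD1 x) //= [X in _ + X]big1 ?addr0; last first.
  by move=> p ne; apply: big1 => q _; apply: h; rewrite ne.
rewrite (bigD1 y) //= big1 ?addr0 // => q ne; apply: h; by rewrite ne orbT.
Qed.

Lemma sum2_pick' (T U : finType) (F : T -> U -> C) x y :
  (forall p q, (p != x) || (q != y) -> F p q = 0) -> \sum_p \sum_q F p q = F x y.
Proof.
move=> h; rewrite (bigD1 x) //= [X in _ + X]big1 ?addr0; last first.
  by move=> p ne; apply: big1 => q _; apply: h; rewrite ne.
rewrite (bigD1 y) //= big1 ?addr0 // => q ne; apply: h; by rewrite ne orbT.
Qed.

Lemma idx_eq p q (x y : 'I_p * 'I_q) : (mxtens_index x == mxtens_index y) = (x == y).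
Proof. exact: (inj_eq (@idx_inj p q)). Qed.

Lemma tensmap_delta n1 m1 n2 m2 (f : 'M[C]_n1 -> 'M[C]_m1) (g : 'M[C]_n2 -> 'M[C]_m2) i k j l :
  tensmap f g (delta_mx (mxtens_index (i, k)) (mxtens_index (j, l))) =
  f (delta_mx i j) *t g (delta_mx k l).
Proof.
apply/matrixP=> r s; rewrite /tensmap summxE.
under eq_bigr do rewrite summxE; under eq_bigr do under eq_bigr do rewrite summxE.
under eq_bigr do under eq_bigr do under eq_bigr do rewrite summxE.
under eq_bigr do under eq_bigr do under eq_bigr do under eq_bigr do rewrite mxE [delta_mx _ _ _ _]mxE !idx_eq !xpair_eqE.
rewrite (sum2_pick' (x := i) (y := j)); last first.
  move=> p q /orP [] /negbTE ne; apply: big1 => k1 _; apply: big1 => l1 _;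
  by rewrite ne ?andbF ?andFb /= ?mulr0n ?mul0r.
rewrite (sum2_pick' (x := k) (y := l)); last first.
  by move=> p q /orP [] /negbTE ne; rewrite ne ?andbF ?andFb /= ?mulr0n ?mul0r.
by rewrite !eqxx /= ?mulr1n ?mul1r.
Qed.

Lemma choiE n1 m1 (f : 'M[C]_n1 -> 'M[C]_m1) I K I' K' :
  choi f (mxtens_index (I, K)) (mxtens_index (I', K')) = f (delta_mx I I') K K'.
Proof.
rewrite /choi summxE; under eq_bigr do rewrite summxE.
under eq_bigr do under eq_bigr do rewrite tensmxE mxE.
rewrite (sum2_pick' (x := I) (y := I')); last first.
  by move=> p q /orP [] /negbTE ne; rewrite [I == _]eq_sym [I' == _]eq_sym ne ?andbF ?andFb /= ?mulr0n ?mul0r.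
by rewrite !eqxx /= ?mulr1n ?mul1r.
Qed.

Lemma ptBZ p q (c : C) (X : 'M[C]_(p * q)) : ptB (c *: X) = c *: ptB X.
Proof. by apply/matrixP=> r s; rewrite /ptB !mxE. Qed.

Lemma tensZl p q p' q' (c : C) (A : 'M[C]_(p, q)) (B : 'M[C]_(p', q')) :
  (c *: A) *t B = c *: (A *t B).
Proof. by apply/matrixP=> r s; rewrite !mxE mulrA. Qed.

Lemma tr_tens p q (A : 'M[C]_p) (B : 'M[C]_q) : \tr (A *t B) = \tr A * \tr B.
Proof. by rewrite /mxtrace mulr_sum; apply: eq_bigr=> r _; rewrite mxE. Qed.

Lemma AopZ p q d (E : 'I_d -> 'I_d -> 'M[C]_(p, q)) (c : C) Y : Aop E (c *: Y) = c *: Aop E Y.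
Proof.
rewrite /Aop scaler_sumr; apply: eq_bigr=> i _; rewrite scaler_sumr; apply: eq_bigr=> j _.
by rewrite -scalemxAr -scalemxAl.
Qed.

Lemma BopZ p q d (E : 'I_d -> 'I_d -> 'M[C]_(p, q)) (c : C) Y : Bop E (c *: Y) = c *: Bop E Y.
Proof.
rewrite /Bop scaler_sumr; apply: eq_bigr=> i _; rewrite scaler_sumr; apply: eq_bigr=> j _.
by rewrite -scalemxAr -scalemxAl.
Qed.

Lemma zmod_chain (V : zmodType) (x y z w : V) : (x - y) + (y - z) + (z - w) = x - w.
Proof. by rewrite !addrA !subrK. Qed.

Section Idx.
Variables (n m d : nat).

Definition idx4 (a : 'I_n) (i : 'I_d) (b : 'I_m) (j : 'I_d) : 'I_((n * d) * (m * d)) :=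
  mxtens_index (mxtens_index (a, i), mxtens_index (b, j)).

Lemma idx4_inj a i b j a' i' b' j' :
  idx4 a i b j = idx4 a' i' b' j' -> [/\ a = a', i = i', b = b' & j = j'].
Proof.
rewrite /idx4 => /idx_inj e.
move: (congr1 fst e) (congr1 snd e) => /= /idx_inj e1 /idx_inj e2.
move: (congr1 fst e1) (congr1 snd e1) (congr1 fst e2) (congr1 snd e2) => /= -> -> -> ->.
by [].
Qed.

Lemma idx4P (P : 'I_((n * d) * (m * d)) -> Prop) :
  (forall a i b j, P (idx4 a i b j)) -> forall r, P r.
Proof.
move=> h r; case: (mxtens_indexP r)=> p q.
case: (mxtens_indexP p)=> a i; case: (mxtens_indexP q)=> b j; exact: h.
Qed.

Lemma idx2P (P : 'I_(n * m) -> Prop) :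
  (forall a b, P (mxtens_index (a, b))) -> forall r, P r.
Proof. by move=> h r; case: (mxtens_indexP r). Qed.

Definition Emx (i j : 'I_d) : 'M[C]_((n * d) * (m * d), n * m) :=
  \matrix_(r, c) ((r == idx4 (mxtens_unindex c).1 i (mxtens_unindex c).2 j)%:R).

Lemma EmxE i j r a b : Emx i j r (mxtens_index (a, b)) = (r == idx4 a i b j)%:R.
Proof. by rewrite /Emx mxE mxtens_indexK. Qed.

Lemma Emx4 i j a i0 b j0 c :
  Emx i j (idx4 a i0 b j0) c = (c == mxtens_index (a, b))%:R * ((i == i0) && (j == j0))%:R.
Proof.
move: c; apply: idx2P=> a' b'; rewrite EmxE.
have [/idx4_inj [<- -> <- ->]|ne] := eqVneq (idx4 a i0 b j0) (idx4 a' i b' j).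
  by rewrite !eqxx mul1r.
have [e|ne2] := eqVneq (mxtens_index (a', b')) (mxtens_index (a, b)); last by rewrite mul0r.
move: e => /idx_inj e; move: (congr1 fst e) (congr1 snd e) => /= ea eb; subst a' b'.
rewrite mul1r; case: eqP=> [ei|]; case: eqP=> [ej|] //=.
by move: ne; rewrite ei ej eqxx.
Qed.

Lemma adjEmxE i j c r : adjmx (Emx i j) c r = Emx i j r c.
Proof. by rewrite adjmxE /Emx mxE conjC_nat. Qed.

Lemma mulEmx p i j (A : 'M[C]_(n * m, p)) a i0 b j0 c :
  (Emx i j *m A) (idx4 a i0 b j0) c = ((i == i0) && (j == j0))%:R * A (mxtens_index (a, b)) c.
Proof.
rewrite mxE (eq_bigr (fun c' => (c' == mxtens_index (a, b))%:R * (((i == i0) && (j == j0))%:R * A c' c))).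
  exact: sum_delta.
by move=> c' _; rewrite Emx4 mulrA.
Qed.

Lemma mulmxEadj p i j (A : 'M[C]_(p, n * m)) a i0 b j0 r :
  (A *m adjmx (Emx i j)) r (idx4 a i0 b j0) = ((i == i0) && (j == j0))%:R * A r (mxtens_index (a, b)).
Proof.
rewrite mxE (eq_bigr (fun c' => (c' == mxtens_index (a, b))%:R * (((i == i0) && (j == j0))%:R * A r c'))).
  exact: sum_delta.
by move=> c' _; rewrite adjEmxE Emx4 mulrC -mulrA.
Qed.

Lemma adjEmxmul p i j (B : 'M[C]_((n * d) * (m * d), p)) a b c :
  (adjmx (Emx i j) *m B) (mxtens_index (a, b)) c = B (idx4 a i b j) c.
Proof.
rewrite mxE (eq_bigr (fun r => (r == idx4 a i b j)%:R * B r c)).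
  exact: sum_delta.
by move=> r _; rewrite adjEmxE EmxE.
Qed.

Lemma mulmxEmx p i j (B : 'M[C]_(p, (n * d) * (m * d))) a b r :
  (B *m Emx i j) r (mxtens_index (a, b)) = B r (idx4 a i b j).
Proof.
rewrite mxE (eq_bigr (fun r' => (r' == idx4 a i b j)%:R * B r r')).
  exact: sum_delta.
by move=> r' _; rewrite EmxE mulrC.
Qed.




Definition Vmx : 'M[C]_((n * d) * (m * d), n * m) := \sum_i Emx i i.

Lemma VXVE X a i b j a' i' b' j' :
  (Vmx *m X *m adjmx Vmx) (idx4 a i b j) (idx4 a' i' b' j') =
  ((i == j) && (i' == j'))%:R * X (mxtens_index (a, b)) (mxtens_index (a', b')).
Proof.
rewrite /Vmx adjmx_sum mulmx_sumr summxE.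
under eq_bigr do rewrite mulmx_suml mulmx_suml summxE.
under eq_bigr do under eq_bigr do rewrite mulmxEadj mulEmx.
rewrite (sum2_pick (x := i') (y := i)); last first.
  by move=> q p /orP [] /negbTE ->; rewrite ?andFb /= ?mulr0n ?mul0r ?mulr0.
by rewrite !eqxx /= natr_andM andbC.
Qed.

Lemma AopE X a i b j a' i' b' j' :
  (Aop Emx X) (idx4 a i b j) (idx4 a' i' b' j') =
  ((i == i') && (j == j'))%:R * X (mxtens_index (a, b)) (mxtens_index (a', b')).
Proof.
rewrite /Aop summxE; under eq_bigr do rewrite summxE.
under eq_bigr do under eq_bigr do rewrite mulmxEadj mulEmx.
rewrite (sum2_pick (x := i) (y := j)); last first.
  by move=> p q /orP [] /negbTE ->; rewrite ?andFb ?andbF /= ?mulr0n ?mul0r ?mulr0.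
by rewrite !eqxx /= ?mulr1n ?mul1r.
Qed.

Lemma BopE X a i b j a' i' b' j' :
  (Bop Emx X) (idx4 a i b j) (idx4 a' i' b' j') =
  ((j == i') && (i == j'))%:R * X (mxtens_index (a, b)) (mxtens_index (a', b')).
Proof.
rewrite /Bop summxE; under eq_bigr do rewrite summxE.
under eq_bigr do under eq_bigr do rewrite mulmxEadj mulEmx.
rewrite (sum2_pick (x := i) (y := j)); last first.
  by move=> p q /orP [] /negbTE ->; rewrite ?andFb ?andbF /= ?mulr0n ?mul0r ?mulr0.
by rewrite !eqxx /= ?mulr1n ?mul1r.
Qed.

Lemma VtXVE X a b a' b' :
  (adjmx Vmx *m X *m Vmx) (mxtens_index (a, b)) (mxtens_index (a', b')) =
  \sum_p \sum_q X (idx4 a p b p) (idx4 a' q b' q).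
Proof.
rewrite /Vmx adjmx_sum mulmx_sumr summxE exchange_big /=; apply: eq_bigr=> q _.
rewrite !mulmx_suml summxE; apply: eq_bigr=> p _.
by rewrite mulmxEmx adjEmxmul.
Qed.

Lemma AopGE X a b a' b' :
  (Aop (fun p q => adjmx (Emx p q)) X) (mxtens_index (a, b)) (mxtens_index (a', b')) =
  \sum_p \sum_q X (idx4 a p b q) (idx4 a' p b' q).
Proof.
rewrite /Aop summxE; apply: eq_bigr=> p _; rewrite summxE; apply: eq_bigr=> q _.
by rewrite adjmxK mulmxEmx adjEmxmul.
Qed.

Lemma BopGE X a b a' b' :
  (Bop (fun p q => adjmx (Emx p q)) X) (mxtens_index (a, b)) (mxtens_index (a', b')) =
  \sum_p \sum_q X (idx4 a p b q) (idx4 a' q b' p).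
Proof.
rewrite /Bop summxE; apply: eq_bigr=> p _; rewrite summxE; apply: eq_bigr=> q _.
by rewrite adjmxK mulmxEmx adjEmxmul.
Qed.

Lemma I1 (N : 'M[C]_n -> 'M[C]_m) :
  choi (tensmap N (fun X : 'M[C]_d => X)) = Vmx *m choi N *m adjmx Vmx.
Proof.
apply/matrixP=> r s; move: r s; apply: idx4P => a i b j; apply: idx4P => a' i' b' j'.
rewrite VXVE /idx4 !choiE tensmap_delta tensmxE [delta_mx i i' _ _]mxE.
rewrite mulrC; congr (_ * _); by rewrite (eq_sym j) (eq_sym j').
Qed.

Lemma I3 (rho : 'M[C]_n) :
  (rho *t (1%:M : 'M[C]_d)) *t (1%:M : 'M[C]_(m * d)) = Aop Emx (rho *t (1%:M : 'M[C]_m)).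
Proof.
apply/matrixP=> r s; move: r s; apply: idx4P => a i b j; apply: idx4P => a' i' b' j'.
rewrite AopE /idx4 !tensmxE !mxE !idx_eq !xpair_eqE.
case: (i == i'); case: (j == j'); case: (b == b');
  by rewrite /= ?mulr1n ?mulr0n ?mulr1 ?mul1r ?mulr0 ?mul0r.
Qed.

Lemma I4 (W : 'M[C]_(n * m)) :
  ptB (Vmx *m W *m adjmx Vmx) = Bop Emx (ptB W).
Proof.
apply/matrixP=> r s; move: r s; apply: idx4P => a i b j; apply: idx4P => a' i' b' j'.
rewrite BopE /idx4 ptBE ptBE.
rewrite (VXVE W a i b' j' a' i' b j).
by rewrite andbC (eq_sym j).
Qed.

Definition trA2 (rho' : 'M[C]_(n * d)) : 'M[C]_n :=
  \matrix_(a, a') \sum_i rho' (mxtens_index (a, i)) (mxtens_index (a', i)).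

Lemma sum_pick_and (F : 'I_d -> C) (c : bool) p :
  \sum_q F q * (c && (p == q))%:R = F p * c%:R.
Proof.
rewrite (bigD1 p) //= eqxx andbT big1 ?addr0 // => q /negbTE.
by rewrite eq_sym => ->; rewrite andbF /= ?mulr0n mulr0.
Qed.

Lemma I5 (rho' : 'M[C]_(n * d)) :
  adjmx Vmx *m (rho' *t (1%:M : 'M[C]_(m * d))) *m Vmx = trA2 rho' *t (1%:M : 'M[C]_m).
Proof.
apply/matrixP=> r s; move: r s; apply: idx2P => a b; apply: idx2P => a' b'.
rewrite VtXVE tensmxE /trA2 !mxE mulr_suml; apply: eq_bigr=> p _.
rewrite /idx4; under eq_bigr do rewrite tensmxE mxE idx_eq xpair_eqE.
by rewrite sum_pick_and.
Qed.

Lemma I6 (W' : 'M[C]_((n * d) * (m * d))) :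
  ptB (adjmx Vmx *m W' *m Vmx) = Bop (fun p q => adjmx (Emx p q)) (ptB W').
Proof.
apply/matrixP=> r s; move: r s; apply: idx2P => a b; apply: idx2P => a' b'.
rewrite BopGE ptBE VtXVE; apply: eq_bigr=> p _; apply: eq_bigr=> q _.
by rewrite /idx4 ptBE.
Qed.

Lemma I7 (rho' : 'M[C]_(n * d)) :
  Aop (fun p q => adjmx (Emx p q)) (rho' *t (1%:M : 'M[C]_(m * d))) =
  d%:R *: (trA2 rho' *t (1%:M : 'M[C]_m)).
Proof.
apply/matrixP=> r s; move: r s; apply: idx2P => a b; apply: idx2P => a' b'.
rewrite AopGE [RHS]mxE tensmxE /trA2 !mxE mulr_suml mulr_sumr; apply: eq_bigr=> p _.
rewrite /idx4; under eq_bigr do rewrite tensmxE mxE idx_eq xpair_eqE eqxx andbT.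
by rewrite sumr_const card_ord mulr_natl.
Qed.

Lemma I2 : adjmx Vmx *m Vmx = d%:R%:M.
Proof.
apply/matrixP=> r s; move: r s; apply: idx2P => a b; apply: idx2P => a' b'.
rewrite -[adjmx Vmx]mulmx1 VtXVE mxE idx_eq xpair_eqE.
transitivity (\sum_(p < d) ((a == a') && (b == b'))%:R : C).
  apply: eq_bigr=> p _; rewrite (bigD1 p) //= big1 ?addr0.
    by rewrite mxE /idx4 !idx_eq !xpair_eqE !idx_eq !xpair_eqE !eqxx !andbT.
  move=> q /negbTE ne; rewrite mxE /idx4 !idx_eq !xpair_eqE !idx_eq !xpair_eqE [p == q]eq_sym ne.
  by rewrite !andbF.
rewrite sumr_const card_ord.
by case: (_ && _); rewrite /= ?mulr1n ?mulr0n ?mul0rn.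
Qed.

Lemma ge_dir (N : 'M[C]_n -> 'M[C]_m) (k : R) W rho : (0 < d)%N ->
  pptp_feasible N k W rho ->
  exists W' rho', pptp_feasible (tensmap N (fun X : 'M[C]_d => X)) (k * d%:R) W' rho' /\
    \tr (choi (tensmap N (fun X : 'M[C]_d => X)) *m W') = \tr (choi N *m W).
Proof.
move=> d0 [f1 f2 f3 f4 f5].
have dnz : (d%:R : C) != 0 by rewrite pnatr_eq0 -lt0n.
have ekd : ((k * d%:R)^-1)%:C%C = (k^-1)%:C%C * (d%:R)^-1.
  by rewrite invfM rmorphM [X in _ * X]fmorphV rmorph_nat.
have eS' : ((d%:R)^-1 *: (rho *t (1%:M : 'M[C]_d))) *t (1%:M : 'M[C]_(m * d)) =
   (d%:R)^-1 *: Aop Emx (rho *t (1%:M : 'M[C]_m)).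
  by rewrite tensZl I3.
have etr : \tr ((d%:R)^-1 *: (rho *t (1%:M : 'M[C]_d))) = 1.
  by rewrite mxtraceZ tr_tens mxtrace1 f3 mul1r mulVf.
have hdl : (d%:R)^-1 * d%:R = 1 :> C by rewrite mulVf.
have dl0 : (0:C) <= (d%:R)^-1 by rewrite invr_ge0 ler0n.
have havg : forall S, psd S -> psd (\sum_p Emx p p *m S *m adjmx (Emx p p) - (d%:R)^-1 *: (Vmx *m S *m adjmx Vmx)).
  move=> S hS; exact: (avg_psd (fun p => Emx p p) d0 hS).
exists (((d%:R)^-1 * (d%:R)^-1) *: (Vmx *m W *m adjmx Vmx)), ((d%:R)^-1 *: (rho *t (1%:M : 'M[C]_d))).
rewrite /pptp_feasible /lemx ekd eS' etr.
move: f1 f2 f4 f5; rewrite /lemx subr0.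
move: (rho *t (1%:M : 'M[C]_m)) => S.
move: ((k^-1)%:C%C) => kk.
move: ((d%:R : C)^-1) hdl dl0 havg => dl hdl dl0 havg f1 f2 f4 f5.
have dd0 : 0 <= dl * dl by rewrite mulr_ge0.
have hS : psd S by have := psdD f2 f1; rewrite subrK.
have f4' := f4; rewrite opprK addrC in f4'.
have f4'' : psd (kk *: S - - ptB W) by rewrite opprK; exact: f4'.
have sc : kk * dl * dl = dl * dl * kk by rewrite -mulrA mulrC.
split; first split => //.
- by rewrite subr0; exact: (psdZ dd0 (psd_congr Vmx f1)).
- pose D := \sum_p Emx p p *m S *m adjmx (Emx p p).
  have e : dl *: Aop Emx S - (dl * dl) *: (Vmx *m W *m adjmx Vmx) =
     dl *: (Aop Emx S - D) + dl *: (D - dl *: (Vmx *m S *m adjmx Vmx))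
     + (dl * dl) *: (Vmx *m (S - W) *m adjmx Vmx).
    by rewrite mulmxBr mulmxBl !scalerBr scalerA zmod_chain.
  rewrite e.
  have eA : Aop Emx S - D = \sum_p \sum_(q | q != p) Emx p q *m S *m adjmx (Emx p q).
    rewrite /Aop /D -sumrB; apply: eq_bigr => p _.
    by rewrite (bigD1 p) //= addrAC subrr add0r.
  have h1 : psd (Aop Emx S - D).
    rewrite eA; apply: psd_sum => p _; apply: psd_sum => q _; exact: psd_congr.
  have h2 : psd (D - dl *: (Vmx *m S *m adjmx Vmx)).
    exact: havg.
  exact: (psdD (psdD (psdZ dl0 h1) (psdZ dl0 h2)) (psdZ dd0 (psd_congr Vmx f2))).
- rewrite ptBZ I4.
  have -> : (dl * dl) *: Bop Emx (ptB W) - - ((kk * dl) *: (dl *: Aop Emx S)) =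
            (dl * dl) *: (Aop Emx (kk *: S) - Bop Emx (- ptB W)).
    by rewrite AopZ BopN !opprK scalerDr !scalerA sc addrC.
  exact: (psdZ dd0 (polar Emx f4'' f5)).
- rewrite ptBZ I4.
  have -> : (kk * dl) *: (dl *: Aop Emx S) - (dl * dl) *: Bop Emx (ptB W) =
            (dl * dl) *: (Aop Emx (kk *: S) - Bop Emx (ptB W)).
    by rewrite AopZ scalerBr !scalerA sc.
  exact: (psdZ dd0 (polar Emx f5 f4')).
rewrite I1 -scalemxAr mxtraceZ !mulmxA.
rewrite -[Vmx *m choi N *m adjmx Vmx *m Vmx]mulmxA I2 mul_mx_scalar -!scalemxAl mxtraceZ.
rewrite mxtrace_mulC !mulmxA I2 mul_scalar_mx -!scalemxAl mxtraceZ.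
by rewrite !mulrA -(mulrA dl dl) hdl mulr1 hdl mul1r.
Qed.

Lemma tr_trA2 (rho' : 'M[C]_(n * d)) : \tr (trA2 rho') = \tr rho'.
Proof.
rewrite /mxtrace [RHS]sum_tens; apply: eq_bigr=> a _; by rewrite mxE.
Qed.

Lemma le_dir (N : 'M[C]_n -> 'M[C]_m) (k : R) W' rho' : (0 < d)%N ->
  pptp_feasible (tensmap N (fun X : 'M[C]_d => X)) (k * d%:R) W' rho' ->
  exists W rho, pptp_feasible N k W rho /\
    \tr (choi N *m W) = \tr (choi (tensmap N (fun X : 'M[C]_d => X)) *m W').
Proof.
move=> d0 [f1 f2 f3 f4 f5].
have dnz : (d%:R : C) != 0 by rewrite pnatr_eq0 -lt0n.
have ekd : ((k * d%:R)^-1)%:C%C = (k^-1)%:C%C * (d%:R)^-1.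
  by rewrite invfM rmorphM [X in _ * X]fmorphV rmorph_nat.
have eT1 : trA2 rho' *t (1%:M : 'M[C]_m) =
    (d%:R)^-1 *: Aop (fun p q => adjmx (Emx p q)) (rho' *t (1%:M : 'M[C]_(m * d))).
  by rewrite I7 scalerA mulVf // scale1r.
have eS : adjmx Vmx *m (rho' *t (1%:M : 'M[C]_(m * d))) *m Vmx = trA2 rho' *t (1%:M : 'M[C]_m) by rewrite I5.
exists (adjmx Vmx *m W' *m Vmx), (trA2 rho').
rewrite /pptp_feasible /lemx tr_trA2 f3 I6.
move: f1 f2 f4 f5; rewrite /lemx subr0 ekd.
move: (rho' *t (1%:M : 'M[C]_(m * d))) eT1 eS => S' eT1 eS f1 f2 f4 f5.
set G := (fun p q : 'I_d => adjmx (Emx p q)).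
have sc : (k^-1)%:C%C * (d%:R)^-1 = (k^-1)%:C%C / d%:R by [].
have f4' := f4; rewrite opprK addrC in f4'.
have f4'' : psd (((k^-1)%:C%C / d%:R) *: S' - - ptB W') by rewrite opprK; exact: f4'.
split; first split => //.
- by rewrite subr0; have := psd_congr (adjmx Vmx) f1; rewrite adjmxK.
- by rewrite -eS -mulmxBl -mulmxBr; have := psd_congr (adjmx Vmx) f2; rewrite adjmxK.
- rewrite eT1 scalerA -AopZ.
  have -> : Bop G (ptB W') - - Aop G (((k^-1)%:C%C / d%:R) *: S') =
           Aop G (((k^-1)%:C%C / d%:R) *: S') - Bop G (- ptB W').
    by rewrite BopN !opprK addrC.
  exact: (polar G f4'' f5).
- rewrite eT1 scalerA -AopZ.
  exact: (polar G f5 f4').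
rewrite I1 !mulmxA mxtrace_mulC !mulmxA.
by [].
Qed.

End Idx.


End Basics.

Unset Implicit Arguments.

Theorem proposition1 (R : realType) (n m d : nat)
  (N : 'M[R[i]]_n -> 'M[R[i]]_m) :
  is_channel N -> (0 < d)%N ->
  (forall k : R, 0 < k ->
     Fpptp (tensmap N (fun X : 'M[R[i]]_d => X)) (k * d%:R) = Fpptp N k) /\
  kappa_pptp (tensmap N (fun X : 'M[R[i]]_d => X)) = ((d%:R)%:E * kappa_pptp N)%E.
Proof.
move=> _ d0.
have hF : forall k : R, Fpptp (tensmap N (fun X : 'M[R[i]]_d => X)) (k * d%:R) = Fpptp N k.
  move=> k; rewrite /Fpptp; congr sup; apply/seteqP; split => r [W [rho [hf he]]].
  - have [W1 [rho1 [hf1 he1]]] := le_dir d0 hf.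
    by exists W1, rho1; split => //; rewrite he1 he.
  - have [W1 [rho1 [hf1 he1]]] := ge_dir d0 hf.
    by exists W1, rho1; split => //; rewrite he1 he.
split; first by move=> k _; exact: hF.
have dR0 : (0 : R) < d%:R by rewrite ltr0n.
have dRnz : (d%:R : R) != 0 by rewrite gt_eqF.
rewrite /kappa_pptp -ereal_sup_pZl //; congr ereal_sup; apply/seteqP; split.
- move=> y [k [k0 hk] <-].
  exists ((k / d%:R)%:E).
    exists (k / d%:R) => //; split; first by rewrite divr_gt0.
    by rewrite -hF divfK.
  by rewrite -EFinM mulrC divfK.
- move=> y [x [k [k0 hk] <-] <-].
  exists (k * d%:R); first by split; [rewrite mulr_gt0 | rewrite hF].
  by rewrite EFinM muleC.
Qed.
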